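(* Let $S$ and $A$ be finite-dimensional quantum systems with $d_A=\dim A$, let $\rho^A$ be a density matrix on $A$, $U^{SA}$ a unitary on $S\otimes A$, and define the CPTP map $\Phi(X):=\operatorname{Tr}_A[U^{SA}(X\otimes\rho^A)(U^{SA})^\dagger]$ on operators of $S$. Let $\Phi^\dagger$ be the trace-dual of $\Phi$. Then for every density matrix $\sigma$ on $S$, $\operatorname{Tr}[\Phi^\dagger(\sigma)]\le d_A$.
   Context: The trace-dual $\Phi^\dagger$ is the linear map satisfying $\operatorname{Tr}[\Phi(X)Y]=\operatorname{Tr}[X\Phi^\dagger(Y)]$ for all operators $X,Y$. *)

(* Defs.v *)
From mathcomp Require Import all_boot all_order all_algebra.
From mathcomp Require Export mxtens.
Set Implicit Arguments. Unset Strict Implicit. Unset Printing Implicit Defensive.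
Import Order.TTheory GRing.Theory Num.Theory.
Local Open Scope ring_scope.
Local Open Scope sesquilinear_scope.

Definition psdmx (C : numClosedFieldType) (n : nat) (A : 'M[C]_n) : Prop :=
  A \is hermsymmx /\ forall v : 'cV[C]_n, 0 <= (v ^t* *m A *m v) 0 0.

Definition density (C : numClosedFieldType) (n : nat) (A : 'M[C]_n) : Prop :=
  psdmx A /\ \tr A = 1.

(* partial trace over the second factor A of S (x) A, with the Kronecker
   product convention of mxtens (basis index (i,k) of S (x) A is
   mxtens_index (i,k)) *)
Definition ptraceA (C : numClosedFieldType) (n m : nat) (M : 'M[C]_(n * m)) : 'M[C]_n :=
  \matrix_(i, j) \sum_(k < m) M (mxtens_index (i, k)) (mxtens_index (j, k)).

Definition Phi (C : numClosedFieldType) (n m : nat) (U : 'M[C]_(n * m)) (rho : 'M[C]_m)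
  (X : 'M[C]_n) : 'M[C]_n :=
  ptraceA (U *m (X *t rho) *m U ^t*).

(* Main.v *)
Require Import Defs.
From mathcomp Require Import all_boot all_order all_algebra ring.
Import Order.TTheory GRing.Theory Num.Theory Num.Def.
Local Open Scope ring_scope.
Local Open Scope sesquilinear_scope.

Section S.
Context {C : numClosedFieldType}.

Definition q {k} (A : 'M[C]_k) (v : 'cV[C]_k) : C := (v ^t* *m A *m v) 0 0.

Lemma qE k (A : 'M[C]_k) v :
  q A v = \sum_i \sum_j conjC (v i 0) * A i j * v j 0.
Proof.
rewrite /q mxE.
under eq_bigr => j _ do rewrite mxE big_distrl.
rewrite exchange_big /=; apply: eq_bigr => i _; apply: eq_bigr => j _.
by rewrite !mxE.
Qed.

Lemma q1E k (v : 'cV[C]_k) : q 1%:M v = \sum_i conjC (v i 0) * v i 0.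
Proof.
rewrite /q mulmx1 mxE; apply: eq_bigr => i _; by rewrite !mxE.
Qed.

Lemma qdiagE k (d : 'rV[C]_k) v : q (diag_mx d) v = \sum_i d 0 i * (conjC (v i 0) * v i 0).
Proof.
rewrite /q mul_mx_diag mxE; apply: eq_bigr => i _; rewrite !mxE; ring.
Qed.

Lemma qM k l (A : 'M[C]_k) (B : 'M[C]_(k, l)) v :
  q (B ^t* *m A *m B) v = q A (B *m v).
Proof.
rewrite /q trmx_mul map_mxM !mulmxA //.
Qed.

Lemma sum_tens n m (F : 'I_(n * m) -> C) :
  \sum_x F x = \sum_(i < n) \sum_(k < m) F (mxtens_index (i, k)).
Proof.
rewrite (reindex (@mxtens_index n m)) /=; last first.
  by exists (@mxtens_unindex n m) => x _; [apply: mxtens_indexK | apply: mxtens_unindexK].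
by rewrite pair_big /=; apply: eq_bigr => -[i k].
Qed.


Lemma qdelta k (A : 'M[C]_k) i0 : q A (delta_mx i0 0) = A i0 i0.
Proof.
rewrite qE (bigD1 i0) //= [X in _ + X]big1 ?addr0 => [|i /negbTE ni].
  rewrite (bigD1 i0) //= [X in _ + X]big1 ?addr0 => [|j /negbTE nj].
    by rewrite !mxE !eqxx /= conjC1 mul1r mulr1.
  by rewrite !mxE nj /= mulr0.
by rewrite big1 // => j _; rewrite !mxE ni /= conjC0 !mul0r.
Qed.

Section Spec.
Variables (k : nat) (S : 'M[C]_k).
Hypothesis Sh : S \is hermsymmx.
Let P := spectralmx S.
Let s := spectral_diag S.
Let PU : P \is unitarymx := spectral_unitarymx S.

Lemma specE : S = P ^t* *m diag_mx s *m P.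
Proof.
have /hermitian_normalmx /orthomx_spectralP E := Sh.
by rewrite {1}E invmx_unitary.
Qed.

Lemma PPt : P *m P ^t* = 1%:M.
Proof. exact/unitarymxP. Qed.

Lemma qspec v : q S v = q (diag_mx s) (P *m v).
Proof. by rewrite {1}specE qM. Qed.

Lemma qspec_delta i0 : q S (P ^t* *m delta_mx i0 0) = s 0 i0.
Proof. by rewrite qspec mulmxA PPt mul1mx qdelta mxE eqxx mulr1n. Qed.

Lemma trspec : \tr S = \sum_i s 0 i.
Proof.
by rewrite {1}specE mxtrace_mulC mulmxA PPt mul1mx mxtrace_diag.
Qed.

Lemma trMspec (M : 'M[C]_k) :
  \tr (M *m S) = \sum_i q M (P ^t* *m delta_mx i 0) * s 0 i.
Proof.
rewrite {1}specE !mulmxA mxtrace_mulC !mulmxA mul_mx_diag /mxtrace.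
apply: eq_bigr => i _; rewrite mxE; congr (_ * _).
by rewrite -qM trmxCK qdelta.
Qed.


End Spec.

Lemma eig_ge0 n (S : 'M[C]_n) : psdmx S -> forall i, 0 <= spectral_diag S 0 i.
Proof. by move=> [Sh Sp] i; rewrite -(@qspec_delta _ S Sh i); apply: Sp. Qed.

Lemma tr_bound k (M S : 'M[C]_k) c : psdmx S ->
  (forall v, q M v <= c * q 1%:M v) -> \tr (M *m S) <= c * \tr S.
Proof.
move=> [Sh Sp] HM.
rewrite -[X in c * \tr X]mul1mx !trMspec // mulr_sumr.
apply: ler_sum => i _; rewrite mulrA ler_wpM2r //.
by apply: eig_ge0.
Qed.

Lemma sum_single {m} (k : 'I_m) (F : 'I_m -> C) : (forall l, l != k -> F l = 0) -> \sum_(l < m) F l = F k.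
Proof. by move=> H; rewrite (bigD1 k) //= big1 ?addr0. Qed.

Lemma rho_le1 k (R : 'M[C]_k) : density R -> forall v, q R v <= q 1%:M v.
Proof.
move=> [[Rh Rp] Rt] v.
have PU := spectral_unitarymx R.
rewrite qspec //.
have -> : q 1%:M v = q 1%:M (spectralmx R *m v).
  by rewrite -qM mulmx1 -[_ ^t* *m _]mul1mx mulmxA mulmxKtV.
rewrite qdiagE q1E; apply: ler_sum => i _.
have h0 : 0 <= conjC ((spectralmx R *m v) i 0) * (spectralmx R *m v) i 0.
  by rewrite mulrC mul_conjC_ge0.
rewrite ler_piMl //.
rewrite -Rt trspec // (bigD1 i) //= lerDl sumr_ge0 // => j _.
by apply: eig_ge0.
Qed.


Section Tens.
Variables n m : nat.

Definition wv (v : 'cV[C]_n) (k : 'I_m) : 'cV[C]_(n * m) :=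
  \col_x (if (mxtens_unindex x).2 == k then v (mxtens_unindex x).1 0 else 0).

Lemma wvE v k i l : wv v k (mxtens_index (i, l)) 0 = if l == k then v i 0 else 0.
Proof. by rewrite mxE mxtens_indexK. Qed.

Lemma q_ptrace (N : 'M[C]_(n * m)) v :
  q (ptraceA N) v = \sum_(k < m) q N (wv v k).
Proof.
rewrite qE.
transitivity (\sum_k \sum_i \sum_j conjC (v i 0) * N (mxtens_index (i, k)) (mxtens_index (j, k)) * v j 0).
  symmetry; rewrite exchange_big; apply: eq_bigr => i _ /=.
  rewrite exchange_big; apply: eq_bigr => j _ /=.
  by rewrite mxE big_distrr big_distrl.
apply: eq_bigr => k _; rewrite qE sum_tens; apply: eq_bigr => i _.
rewrite [RHS](sum_single k) => [|l /negbTE nl]; last first.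
  by rewrite big1 // => y _; rewrite wvE nl conjC0 !mul0r.
rewrite sum_tens; apply: eq_bigr => j _.
rewrite (sum_single k) => [|l /negbTE nl]; last first.
  by rewrite (wvE v k j l) nl mulr0.
by rewrite !wvE !eqxx.
Qed.

Lemma q1_wv v k : q 1%:M (wv v k) = q 1%:M v.
Proof.
rewrite !q1E sum_tens; apply: eq_bigr => i _.
rewrite (sum_single k) => [|l /negbTE nl]; last first.
  by rewrite wvE nl conjC0 mul0r.
by rewrite wvE eqxx.
Qed.

Lemma q_tens1 (R : 'M[C]_m) x :
  q (1%:M *t R) x = \sum_(i < n) q R (\col_l x (mxtens_index (i, l)) 0).
Proof.
rewrite qE sum_tens; apply: eq_bigr => i _.
rewrite qE; apply: eq_bigr => l _.
rewrite sum_tens (sum_single i) => [|j /negbTE nj]; last first.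
  by apply: big1 => l2 _; rewrite tensmxE mxE eq_sym nj mul0r mulr0 mul0r.
apply: eq_bigr => l2 _.
by rewrite tensmxE !mxE eqxx mul1r.
Qed.

Lemma q1_tens x :
  q 1%:M x = \sum_(i < n) q 1%:M (\col_l x (mxtens_index (i, l)) 0 : 'cV[C]_m).
Proof.
rewrite q1E sum_tens; apply: eq_bigr => i _.
by rewrite q1E; apply: eq_bigr => l _; rewrite !mxE.
Qed.

End Tens.
End S.

Lemma HN (C : numClosedFieldType) (n m : nat) (rho : 'M[C]_m) (U : 'M[C]_(n * m)) w :
  density rho -> U \is unitarymx ->
  q (U *m (1%:M *t rho) *m U ^t*) w <= q 1%:M w.
Proof.
move=> Hr HU.
rewrite -{1}(trmxCK U) qM q_tens1.
have -> : q 1%:M w = q 1%:M (U ^t* *m w).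
  by rewrite -qM trmxCK mulmx1 (unitarymxP HU).
rewrite q1_tens; apply: ler_sum => i _; exact: rho_le1.
Qed.

Theorem mainTheorem6 (C : numClosedFieldType) (n m : nat)
  (rho : 'M[C]_m) (U : 'M[C]_(n * m)) (Phidag : 'M[C]_n -> 'M[C]_n) :
  density rho -> U \is unitarymx ->
  (forall X Y : 'M[C]_n, \tr (Phi U rho X *m Y) = \tr (X *m Phidag Y)) ->
  forall sigma : 'M[C]_n, density sigma -> \tr (Phidag sigma) <= m%:R.
Proof.
move=> Hr HU Hdual sigma [Hs Ht].
have -> : \tr (Phidag sigma) = \tr (Phi U rho 1%:M *m sigma) by rewrite Hdual mul1mx.
suff HB : forall v, q (Phi U rho 1%:M) v <= m%:R * q 1%:M v.
  by apply: le_trans (@tr_bound _ _ _ _ _ Hs HB) _; rewrite Ht mulr1.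
move=> v; rewrite /Phi q_ptrace.
apply: le_trans (ler_sum _ (fun k _ => @HN _ _ _ rho U (wv n m v k) Hr HU)) _.
by rewrite (eq_bigr _ (fun k _ => q1_wv n m v k)) sumr_const card_ord mulr_natl.
Qed.
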